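(* Consider the Filtered Greedy Strategy (\texttt{FGS}), which maintains a current set $\mathcal B_1$ of atomic mini-batches and iteratively removes mini-batches from it. If a file $f$ satisfies the inequality $$n(f)\Bigl(l(f)+\sum_{b\in\mathcal B_1,\ l(b)<l(f)}s(b)\Bigr) < s(f)\Bigl(\sum_{f'\in\mathcal F,\ l(f')<l(f)}n(f')+\sum_{f'\in\mathcal F\setminus\mathcal F(\mathcal B_1),\ l(f')>l(f)}n(f')\Bigr)$$ (evaluated with the current set $\mathcal B_1$) in the $i$-th iteration of \texttt{FGS}, then $f$ also satisfies this inequality (evaluated with the then-current $\mathcal B_1$) in the $j$-th iteration for every $j\ge i$.
   Context: A single-track tape stores a sequence of files $\mathcal F=(f_1,\dots,f_n)$ laid out contiguously from left to right: file $f$ occupies blocks $l(f),\dots,r(f)$ and has size $s(f)=r(f)-l(f)+1$, with $l(f_1)=1$, $l(f_{i+1})=r(f_i)+1$. $\mathcal R$ is a finite set of read requests, each associated with a file; $n(f)$ is the number of requests for $f$. A mini-batch is a pair $b=(f,f')$ of files with $l(f)\le l(f')$; $l(b)=l(f)$, $r(b)=r(f')$, $s(b)=r(b)-l(b)+1$, $\mathcal F(b)$ is the set of files $g$ with $l(b)\le l(g)$, $r(g)\le r(b)$, atomic if $|\mathcal F(b)|=1$, and $\mathcal F(\mathcal B_1)=\bigcup_{b\in\mathcal B_1}\mathcal F(b)$. \texttt{FGS} starts with $\mathcal B_1=\{(f,f): f\in\mathcal F\setminus\{f_1\},\ n(f)>0\}$ (the output of the Greedy Strategy) and then, for $|\mathcal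 F|$ rounds, inspects each file $f\in\mathcal F(\mathcal B_1)$ and removes $(f,f)$ from $\mathcal B_1$ whenever the displayed inequality holds for the current $\mathcal B_1$; each inspection is an iteration. *)

(* Defs.v *)
From mathcomp Require Import all_boot.
Set Implicit Arguments. Unset Strict Implicit. Unset Printing Implicit Defensive.

Section FGS.
(* Files f_1..f_n are the ordinals 'I_n (f_1 is ord 0), laid out left to right;
   sz f = s(f) (in blocks), nreq f = n(f) = number of requests for f. *)
Variables (n : nat) (sz : 'I_n -> nat) (nreq : 'I_n -> nat).

(* l(f_1) = 1, l(f_{i+1}) = r(f_i) + 1 = l(f_i) + s(f_i). *)
Definition lpos (f : 'I_n) : nat := 1 + \sum_(k < n | k < f) sz k.

(* A set B1 of atomic mini-batches (f,f) is represented by the set of files f;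
   for atomic b = (f,f), l(b) = l(f), s(b) = s(f), and F(B1) = B1. *)
Definition fgs_ineq (B1 : {set 'I_n}) (f : 'I_n) : bool :=
  nreq f * (lpos f + \sum_(b in B1 | lpos b < lpos f) sz b)
  < sz f * (\sum_(g : 'I_n | lpos g < lpos f) nreq g
            + \sum_(g in ~: B1 | lpos f < lpos g) nreq g).

(* Initial set: output of the Greedy Strategy. *)
Definition fgs_init : {set 'I_n} :=
  [set f : 'I_n | (val f != 0) && (0 < nreq f)].

Definition fgs_step (f : 'I_n) (B1 : {set 'I_n}) : {set 'I_n} :=
  if fgs_ineq B1 f then B1 :\ f else B1.

(* Inspect the files of fs in order; returns the list of the sets B1 current
   at each inspection (i.e. when the inequality is evaluated), and the final set. *)
Fixpoint fgs_round (fs : seq 'I_n) (B1 : {set 'I_n})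
  : seq {set 'I_n} * {set 'I_n} :=
  match fs with
  | [::] => ([::], B1)
  | f :: fs' => let: (st, B') := fgs_round fs' (fgs_step f B1) in (B1 :: st, B')
  end.

(* k rounds; each round inspects every file of F(B1), left to right. *)
Fixpoint fgs_run (k : nat) (B1 : {set 'I_n}) : seq {set 'I_n} :=
  match k with
  | 0 => [::]
  | k'.+1 => let: (st, B') := fgs_round (enum B1) B1 in st ++ fgs_run k' B'
  end.

(* The sequence of sets B1 current at iterations 0,1,2,... of FGS (|F| = n rounds). *)
Definition fgs_trace : seq {set 'I_n} := fgs_run n fgs_init.

End FGS.

(* Main.v *)
Require Import Defs.
From mathcomp Require Import all_boot.

Section Aux.
Variables (n : nat) (sz nreq : 'I_n -> nat).

Definition Rsub (A C : {set 'I_n}) : bool := C \subset A.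

Lemma sum_sub (B' B : {set 'I_n}) (P : pred 'I_n) (F : 'I_n -> nat) :
  B' \subset B -> \sum_(b in B' | P b) F b <= \sum_(b in B | P b) F b.
Proof.
move=> sB; rewrite [X in X <= _]big_mkcond [X in _ <= X]big_mkcond /=.
apply: leq_sum => b _.
case hb: (b \in B'); last by [].
by rewrite (subsetP sB b hb).
Qed.

Lemma ineq_mono (B' B : {set 'I_n}) f :
  B' \subset B -> fgs_ineq sz nreq B f -> fgs_ineq sz nreq B' f.
Proof.
move=> sB; rewrite /fgs_ineq => H.
apply: leq_ltn_trans (leq_trans H _).
  by apply: leq_mul => //; rewrite leq_add2l; apply: sum_sub.
apply: leq_mul => //; rewrite leq_add2l; apply: sum_sub.
by rewrite setCS.
Qed.

Lemma round_inv fs B :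
  let: (st, B') := fgs_round sz nreq fs B in
  pairwise Rsub (B :: (st ++ [:: B'])).
Proof.
elim: fs B => [|f fs IH] B /=.
  by rewrite /Rsub subxx.
have sB : fgs_step sz nreq f B \subset B.
  by rewrite /fgs_step; case: ifP => _ //; rewrite subD1set.
move: (IH (fgs_step sz nreq f B)).
case: (fgs_round sz nreq fs (fgs_step sz nreq f B)) => st0 B' /=.
case/andP=> H1 H2.
have H1' : all (Rsub B) (st0 ++ [:: B']).
  by apply/allP => x hx; apply: subset_trans sB; apply: (allP H1).
rewrite /= H1' H2 /Rsub subxx.
by [].
Qed.

Lemma run_inv k B : pairwise Rsub (B :: fgs_run sz nreq k B).
Proof.
elim: k B => [|k IH] B /=; first by [].
move: (round_inv (enum B) B).
case: (fgs_round sz nreq (enum B) B) => st B' /=.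
move: (IH B') => /= /andP [A2 P2].
case/andP => A1c P1c.
move: A1c; rewrite all_cat => /andP [A1 /andP [RB' _]].
move: P1c; rewrite pairwise_cat => /and3P [Al1 Ps1 _].
rewrite pairwise_cat all_cat A1 P2 Ps1 /= andbT.
have HB' : forall y, y \in fgs_run sz nreq k B' -> y \subset B'.
  by move=> y hy; apply: (allP A2).
apply/andP; split.
- apply/allP => y hy; apply: subset_trans (HB' y hy) _; exact: RB'.
- apply/allrelP => x y hx hy.
  have := allrelP Al1 x B' hx; rewrite mem_seq1 eqxx => /(_ isT) hxB'.
  exact: subset_trans (HB' y hy) hxB'.
Qed.

End Aux.

Theorem lemma1 (n : nat) (sz nreq : 'I_n -> nat) (hsz : forall f, 0 < sz f)
  (f : 'I_n) (i j : nat) :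
  i <= j -> j < size (fgs_trace sz nreq) ->
  fgs_ineq sz nreq (nth set0 (fgs_trace sz nreq) i) f ->
  fgs_ineq sz nreq (nth set0 (fgs_trace sz nreq) j) f.
Proof.
move=> hij hj; apply: ineq_mono.
rewrite leq_eqVlt in hij; case/orP: hij => [/eqP -> | hlt]; first exact: subxx.
have := @run_inv n sz nreq n (fgs_init nreq); rewrite /= => /andP [_ P].
rewrite /fgs_trace in hj *.
exact: ((pairwiseP set0 P) i j (leq_ltn_trans (ltnW hlt) hj) hj hlt).
Qed.
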